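(* For any $0 \le \alpha \le \beta \le 1$ and $p \in [0,1]$, $$p\,|p - \alpha| + (1-p)\,|p - \beta| \le 2\left[\,\left|p(1-\alpha) - (1-p)\beta\right| + (\beta - \alpha)\min\{p(1-\alpha), (1-p)\beta\}\right].$$ *)

(* Defs.v *)
From Stdlib Require Import Reals.

(* Main.v *)
Require Import Defs.
From Stdlib Require Import Reals Lra Psatz.
Open Scope R_scope.

Theorem lemma16 (alpha beta p : R)
  (Ha0 : 0 <= alpha) (Hab : alpha <= beta) (Hb1 : beta <= 1)
  (Hp0 : 0 <= p) (Hp1 : p <= 1) :
  p * Rabs (p - alpha) + (1 - p) * Rabs (p - beta) <=
  2 * (Rabs (p * (1 - alpha) - (1 - p) * beta)
       + (beta - alpha) * Rmin (p * (1 - alpha)) ((1 - p) * beta)).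
Proof.
  assert (H1 : 0 <= p * ((beta - alpha) * (1 - alpha))).
  { apply Rmult_le_pos; [lra| apply Rmult_le_pos; lra]. }
  assert (H2 : 0 <= (1 - p) * ((beta - alpha) * beta)).
  { apply Rmult_le_pos; [lra| apply Rmult_le_pos; lra]. }
  unfold Rmin; destruct (Rle_dec _ _);
  destruct (Rcase_abs (p - alpha)) as [h1|h1];
  [rewrite (Rabs_left _ h1) | rewrite (Rabs_right _ h1) | rewrite (Rabs_left _ h1) | rewrite (Rabs_right _ h1)];
  destruct (Rcase_abs (p - beta)) as [h2|h2];
  try rewrite (Rabs_left _ h2); try rewrite (Rabs_right _ h2);
  destruct (Rcase_abs (p * (1 - alpha) - (1 - p) * beta)) as [h3|h3];
  try rewrite (Rabs_left _ h3); try rewrite (Rabs_right _ h3);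
  nra.
Qed.
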